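(* Let $\Omega$ be a compact Hausdorff space such that $C(\Omega)$ admits an equivalent URED norm. Let $E\subset\Omega$ be closed and $J=\{f\in C(\Omega): f|_E=0\}$, with quotient map $\pi:C(\Omega)\to C(\Omega)/J$. Suppose that for every Banach lattice $X$ and every bounded linear lattice homomorphism $T:X\to C(\Omega)/J$ there is a linear lattice homomorphism $T':X\to C(\Omega)$ with $\pi\circ T'=T$ and $\|T'\|=\|T\|$. Then $C(\Omega)/J$ admits an equivalent URED norm.
   Context: $C(\Omega)$ is the Banach lattice of real-valued continuous functions on $\Omega$ with the supremum norm and pointwise order; $C(\Omega)/J$ is identified (isometrically and as a Banach lattice) with $C(E)$ via $\pi(f)\mapsto f|_E$. A norm on a Banach space $Y$ is uniformly rotund in every direction (URED) if whenever $(x_n),(y_n)$ are sequences of unit vectors with $\lim_n\|\tfrac{x_n+y_n}{2}\|=1$ and there exist $z\in Y$ and scalars $r_n$ with $x_n-y_n=r_nz$ for all $n$, then $\lim_n\|x_n-y_n\|=0$. *)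

(* Defs.v *)
From HB Require Import structures.
From mathcomp Require Import all_boot all_order all_algebra.
From mathcomp Require Import all_classical all_reals all_analysis.
Set Implicit Arguments. Unset Strict Implicit. Unset Printing Implicit Defensive.
Import Order.TTheory GRing.Theory Num.Theory.
Import numFieldNormedType.Exports.
Local Open Scope classical_set_scope.
Local Open Scope ring_scope.

(* Convention: for a compact Hausdorff space Om and a set A of Om,
   C_A denotes the space of "restrictions to A of continuous functions on Om",
   represented by continuous functions f : Om -> R, two of them being identified
   when they agree on A, with norm  supn A f = sup_{a in A} |f a|.
   For A = setT this is C(Om) with the sup norm; for A = E closed this is
   C(Om)/J identified (as in the paper's context) with C(E) via pi(f) |-> f|_E. *)

Section Defs.
Context {R : realType} {Om : topologicalType}.

Definition supn (A : set Om) (f : Om -> R) : R := sup [set `|f a| | a in A].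

Definition equiv_norm_on (A : set Om) (N : (Om -> R) -> R) : Prop :=
  (forall f g : Om -> R, continuous f -> continuous g ->
     (forall a, A a -> f a = g a) -> N f = N g) /\
  (forall f g : Om -> R, continuous f -> continuous g ->
     N (fun t => f t + g t) <= N f + N g) /\
  (forall (c : R) (f : Om -> R), continuous f ->
     N (fun t => c * f t) = `|c| * N f) /\
  exists c1 c2 : R, 0 < c1 /\ 0 < c2 /\
    forall f : Om -> R, continuous f ->
      c1 * supn A f <= N f /\ N f <= c2 * supn A f.

Definition URED_on (A : set Om) (N : (Om -> R) -> R) : Prop :=
  forall (x y : nat -> Om -> R) (z : Om -> R) (r : nat -> R),
    (forall n, continuous (x n)) -> (forall n, continuous (y n)) -> continuous z ->
    (forall n, N (x n) = 1) -> (forall n, N (y n) = 1) ->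
    (fun n => N (fun t => (x n t + y n t) / 2)) @ \oo --> (1 : R) ->
    (forall n a, A a -> x n a - y n a = r n * z a) ->
    (fun n => N (fun t => x n t - y n t)) @ \oo --> (0 : R).

Definition admits_equiv_URED (A : set Om) : Prop :=
  exists N : (Om -> R) -> R, equiv_norm_on A N /\ URED_on A N.

End Defs.

Definition banach_lattice {R : realType} (X : completeNormedModType R)
    (le : X -> X -> Prop) (jn : X -> X -> X) : Prop :=
  (forall x, le x x) /\
  (forall x y, le x y -> le y x -> x = y) /\
  (forall x y z, le x y -> le y z -> le x z) /\
  (forall x y z, le x y -> le (x + z) (y + z)) /\
  (forall (a : R) x y, 0 <= a -> le x y -> le (a *: x) (a *: y)) /\
  (forall x y, le x (jn x y) /\ le y (jn x y) /\
     forall z, le x z -> le y z -> le (jn x y) z) /\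
  (forall x y, le (jn x (- x)) (jn y (- y)) -> `|x| <= `|y|).

Definition lattice_hom_on {R : realType} {Om : topologicalType}
    (X : completeNormedModType R) (jn : X -> X -> X)
    (A : set Om) (T : X -> Om -> R) : Prop :=
  (forall x, continuous (T x)) /\
  (forall (c : R) (x y : X) a, A a -> T (c *: x + y) a = c * T x a + T y a) /\
  (forall (x y : X) a, A a -> T (jn x y) a = Num.max (T x a) (T y a)).

Definition opnorm_is {R : realType} {Om : topologicalType}
    (X : completeNormedModType R) (A : set Om) (T : X -> Om -> R) (c : R) : Prop :=
  0 <= c /\
  (forall x, supn A (T x) <= c * `|x|) /\
  (forall d : R, (forall x, supn A (T x) <= d * `|x|) -> c <= d).

(* Main.v *)
Require Import Defs.
From HB Require Import structures.
From mathcomp Require Import all_boot all_order all_algebra.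
From mathcomp Require Import all_classical all_reals all_analysis.
From mathcomp Require Import ring lra.
Import Order.TTheory GRing.Theory Num.Theory.
Import numFieldNormedType.Exports.
Local Open Scope classical_set_scope.
Local Open Scope ring_scope.

Section S.
Context {R : realType} {Om : topologicalType}.
Hypothesis cpt : compact [set: Om].

Lemma cont_bnd (f : Om -> R) : continuous f -> exists M, forall t, `|f t| <= M.
Proof.
move=> cf.
have : compact (f @` setT) by apply: continuous_compact => //; exact: continuous_subspaceT.
move=> /(@compact_bounded R R^o) [M [_ HM]].
exists (M + 1) => t; apply: (HM (M+1)); first by rewrite ltrDl.
by exists t.
Qed.

Lemma supn_ub (A : set Om) (f : Om -> R) a : continuous f -> A a -> `|f a| <= supn A f.
Proof.
move=> /cont_bnd [M HM] Ea; apply: sup_upper_bound; last by exists a.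
split; first by exists `|f a|, a.
by exists M => _ [b _ <-].
Qed.

Lemma supn_le (A : set Om) (f : Om -> R) M : 0 <= M -> (forall a, A a -> `|f a| <= M) ->
  supn A f <= M.
Proof.
move=> M0 HM; have [->|/set0P[a Ea]] := eqVneq A set0.
  by rewrite /supn image_set0 sup0.
apply: ge_sup; first by exists `|f a|, a.
by move=> _ [b Eb <-]; apply: HM.
Qed.

Lemma supn_ge0 (A : set Om) (f : Om -> R) : continuous f -> 0 <= supn A f.
Proof.
move=> cf; have [->|/set0P[a Ea]] := eqVneq A set0.
  by rewrite /supn image_set0 sup0.
exact: (le_trans (normr_ge0 (f a)) (supn_ub A f a cf Ea)).
Qed.

Variable E : set Om.

Definition agree (f g : Om -> R) := forall a, E a -> f a = g a.
Definition cls_set (f : Om -> R) := [set g : Om -> R | continuous g /\ agree f g].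
Definition rep (f : Om -> R) : Om -> R := xget f (cls_set f).

Lemma cls_set_eq {f g} : agree f g -> cls_set f = cls_set g.
Proof.
move=> fg; rewrite /cls_set; apply/seteqP; split => h /= [ch H]; split => // a Ea.
  by rewrite -(fg a Ea); apply: H.
by rewrite (fg a Ea); apply: H.
Qed.

Lemma rep_agree f : agree f (rep f).
Proof.
rewrite /rep; case: xgetP => [g -> [_ //]|_ //].
Qed.

Lemma rep_cont {f} : continuous f -> continuous (rep f).
Proof.
move=> cf; rewrite /rep; case: xgetP => [g -> [//]|H].
by exfalso; apply: (H f); split.
Qed.

Lemma rep_eq {f g} : continuous f -> agree f g -> rep f = rep g.
Proof.
move=> cf fg; rewrite /rep /xget (cls_set_eq fg); case: pselect => // nex.
exfalso; apply: nex; exists f; apply/asboolP; split => // a Ea; by rewrite fg.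
Qed.

Lemma rep_idem {f} : continuous f -> rep (rep f) = rep f.
Proof. move=> cf; apply/esym/rep_eq => //; exact: rep_agree. Qed.

Record X := MkX { xv : Om -> R ; xv_cont : continuous xv ; xv_rep : rep xv = xv }.

Definition mkX {f : Om -> R} (cf : continuous f) : X :=
  @MkX (rep f) (rep_cont cf) (rep_idem cf).

Lemma X_eq (x y : X) : agree (xv x) (xv y) -> x = y.
Proof.
case: x => f cf rf; case: y => g cg rg /= fg.
have fgeq : f = g by rewrite -rf -rg; apply: rep_eq.
subst g; congr MkX; exact: Prop_irrelevance.
Qed.

Lemma mkX_agree {f : Om -> R} (cf : continuous f) : agree (xv (mkX cf)) f.
Proof. move=> a Ea /=; by rewrite -rep_agree. Qed.


Lemma cD {f g : Om -> R} : continuous f -> continuous g -> continuous (fun t => f t + g t).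
Proof. by move=> cf cg t; apply: cvgD; [apply: cf|apply: cg]. Qed.
Lemma cM (c : R) {f : Om -> R} : continuous f -> continuous (fun t => c * f t).
Proof. by move=> cf t; apply: cvgM; [apply: cvg_cst|apply: cf]. Qed.
Lemma cN {f : Om -> R} : continuous f -> continuous (fun t => - f t).
Proof. by move=> cf t; apply: cvgN; apply: cf. Qed.
Lemma cC (c : R) : continuous (fun _ : Om => c).
Proof. by move=> t; apply: cvg_cst. Qed.
Lemma cMax {f g : Om -> R} : continuous f -> continuous g ->
  continuous (fun t => Num.max (f t) (g t)).
Proof. by move=> cf cg t; apply: (@continuous_max R Om f g t); [apply: cf|apply: cg]. Qed.
Lemma cMin {f g : Om -> R} : continuous f -> continuous g ->
  continuous (fun t => Num.min (f t) (g t)).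
Proof. by move=> cf cg t; apply: (@continuous_min R Om f g t); [apply: cf|apply: cg]. Qed.

HB.instance Definition _ := gen_eqMixin X.
HB.instance Definition _ := gen_choiceMixin X.

Definition xzero : X := mkX (cC 0).
Definition xopp (x : X) : X := mkX (cN (xv_cont x)).
Definition xadd (x y : X) : X := mkX (cD (xv_cont x) (xv_cont y)).
Definition xscale (c : R) (x : X) : X := mkX (cM c (xv_cont x)).

Lemma xzeroE a : E a -> xv xzero a = 0. Proof. exact: mkX_agree. Qed.
Lemma xoppE x a : E a -> xv (xopp x) a = - xv x a. Proof. exact: mkX_agree. Qed.
Lemma xaddE x y a : E a -> xv (xadd x y) a = xv x a + xv y a. Proof. exact: mkX_agree. Qed.
Lemma xscaleE c x a : E a -> xv (xscale c x) a = c * xv x a. Proof. exact: mkX_agree. Qed.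

Lemma xaddA : associative xadd.
Proof. by move=> x y z; apply: X_eq => a Ea; rewrite !xaddE // addrA. Qed.
Lemma xaddC : commutative xadd.
Proof. by move=> x y; apply: X_eq => a Ea; rewrite !xaddE // addrC. Qed.
Lemma xadd0 : left_id xzero xadd.
Proof. by move=> x; apply: X_eq => a Ea; rewrite !xaddE // xzeroE // add0r. Qed.
Lemma xaddN : left_inverse xzero xopp xadd.
Proof. by move=> x; apply: X_eq => a Ea; rewrite !xaddE // xoppE // xzeroE // addNr. Qed.

HB.instance Definition _ := GRing.isZmodule.Build X xaddA xaddC xadd0 xaddN.


Lemma xvD (x y : X) a : E a -> xv (x + y) a = xv x a + xv y a. Proof. exact: xaddE. Qed.
Lemma xvN (x : X) a : E a -> xv (- x) a = - xv x a. Proof. exact: xoppE. Qed.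
Lemma xv0 a : E a -> xv (0 : X) a = 0. Proof. exact: xzeroE. Qed.

Lemma xscaleA a b v : xscale a (xscale b v) = xscale (a * b) v.
Proof. by apply: X_eq => t Et; rewrite !xscaleE // mulrA. Qed.
Lemma xscale1 : left_id 1 xscale.
Proof. by move=> x; apply: X_eq => t Et; rewrite !xscaleE // mul1r. Qed.
Lemma xscaleDr : right_distributive xscale +%R.
Proof. by move=> c x y; apply: X_eq => t Et; rewrite xscaleE // !xvD // !xscaleE // mulrDr. Qed.
Lemma xscaleDl v : {morph xscale^~ v: a b / a + b}.
Proof. by move=> c d; apply: X_eq => t Et; rewrite xscaleE // !xvD // !xscaleE // mulrDl. Qed.

HB.instance Definition _ := GRing.Zmodule_isLmodule.Build R X xscaleA xscale1 xscaleDr xscaleDl.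

Lemma xvZ c (x : X) a : E a -> xv (c *: x) a = c * xv x a. Proof. exact: xscaleE. Qed.
Lemma xvB (x y : X) a : E a -> xv (x - y) a = xv x a - xv y a.
Proof. by move=> Ea; rewrite xvD // xvN. Qed.


Definition xnorm (x : X) : R := supn E (xv x).
Lemma xs_ge0 (x : X) : 0 <= supn E (xv x).
Proof. exact/(supn_ge0 E)/xv_cont. Qed.
Lemma xs_ub (x : X) a : E a -> `|xv x a| <= supn E (xv x).
Proof. exact/(supn_ub E)/xv_cont. Qed.

Lemma xnormD x y : xnorm (x + y) <= xnorm x + xnorm y.
Proof.
apply: supn_le; first by rewrite addr_ge0 // xs_ge0.
move=> a Ea; rewrite xvD //; apply: (le_trans (ler_normD _ _)).
by rewrite lerD // xs_ub.
Qed.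

Lemma xnormZ (l : R) x : xnorm (l *: x) = `|l| * xnorm x.
Proof.
apply/eqP; rewrite eq_le; apply/andP; split.
  apply: supn_le; first by rewrite mulr_ge0 // xs_ge0.
  move=> a Ea; rewrite xvZ // normrM ler_wpM2l //.
  by rewrite xs_ub.
have [->|l0] := eqVneq l 0; first by rewrite normr0 mul0r; apply: xs_ge0.
have nl0 : 0 < `|l| by rewrite normr_gt0.
rewrite -ler_pdivlMl //; apply: supn_le.
  by apply: mulr_ge0; [rewrite invr_ge0 ltW | apply: xs_ge0].
move=> a Ea; rewrite ler_pdivlMl // -normrM -xvZ //.
by rewrite xs_ub.
Qed.

Lemma xnorm0 x : xnorm x = 0 -> x = 0.
Proof.
move=> H; apply: X_eq => a Ea; rewrite xv0 //.
apply/normr0_eq0/eqP; rewrite eq_le normr_ge0 andbT -H.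
by rewrite xs_ub.
Qed.

HB.instance Definition _ := Lmodule_isNormed.Build R X xnormD xnormZ xnorm0.

Lemma xnormE (x : X) : `|x| = supn E (xv x). Proof. by []. Qed.


Definition e2 (n : nat) : R := ((2:R) ^+ n)^-1.
Lemma e2_gt0 n : 0 < e2 n. Proof. by rewrite /e2 invr_gt0 exprn_gt0. Qed.
Lemma e2S n : e2 n.+1 = e2 n / 2.
Proof. by rewrite /e2 exprS invfM mulrC. Qed.
Lemma e2_small d : 0 < d -> exists n, e2 n < d.
Proof.
move=> d0; exists (Num.Def.trunc d^-1).+1; rewrite /e2 -(invrK d).
rewrite ltf_pV2 ?posrE ?exprn_gt0 ?invr_gt0 //.
apply: (lt_trans (truncnS_gt _)).
by rewrite -natrX ltr_nat invrK ltn_expl.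
Qed.

Lemma norm_ball (x y : X) r : ball x r y <-> `|x - y| < r.
Proof. by rewrite -ball_normE. Qed.

Lemma X_complete (F : set_system X) : ProperFilter F -> cauchy F -> cvg F.
Proof.
move=> PF /cauchyP FC.
have [xs Hxs] : {xs : nat -> X & forall k, F (ball (xs k) (e2 k))}.
  exact: (choice (fun k => FC _ (e2_gt0 k))).
pose D k := 2 * e2 k.
have D0 k : 0 <= D k by rewrite mulr_ge0 // ltW // e2_gt0.
have dxs k : `|xs k.+1 - xs k| <= D k.
  have [y [/norm_ball y1 /norm_ball y2]] := filter_ex (filterI (Hxs k) (Hxs k.+1)).
  apply: (le_trans (ler_distD y _ _)); rewrite (distrC y).
  rewrite /D mulr2n mulrDl mul1r; apply: ltW; apply: ltrD => //.
  by apply: (lt_le_trans y2); rewrite e2S ler_pdivrMr // ler_peMr // ?ler1n // ltW // e2_gt0.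
pose h k := xv (xs k.+1 - xs k).
pose c k t := Num.max (- D k) (Num.min (D k) (h k t)).
have cc k : continuous (c k) by apply: cMax; [apply: cC | apply: cMin; [apply: cC | apply: xv_cont]].
have cbd k t : `|c k t| <= D k.
  rewrite ler_norml le_max lexx /= ge_max lerNl ?D0 /=.
  by rewrite ge_min lexx /= andbT (le_trans _ (D0 k)) // oppr_le0 D0.
have cE k a : E a -> c k a = xv (xs k.+1) a - xv (xs k) a.
  move=> Ea; have hb : `|h k a| <= D k by exact: (le_trans (xs_ub _ _ Ea) (dxs k)).
  move: hb; rewrite ler_norml => /andP[h1 h2].
  by rewrite /c min_r // max_r // /h xvB.
pose g := fix g n := if n is n'.+1 then (fun t => g n' t + c n' t) else xv (xs 0).
have gc n : continuous (g n).
  by elim: n => [|n IH] /=; [apply: xv_cont | apply: cD].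
have gE n a : E a -> g n a = xv (xs n) a.
  by move=> Ea; elim: n => [|n IH] //=; rewrite IH cE // addrC subrK.
pose lo t n := g n t - 2 * D n.
pose hi t n := g n t + 2 * D n.
have DS n : D n.+1 = D n / 2 by rewrite /D e2S mulrA.
have lo_inc t : {homo lo t : n m / (n <= m)%N >-> n <= m}.
  apply/nondecreasing_seqP => n; rewrite /lo /= DS.
  have := cbd n t; rewrite ler_norml => /andP[c1 _].
  lra.
have hi_dec t : {homo hi t : n m / (n <= m)%N >-> m <= n}.
  apply/nonincreasing_seqP => n; rewrite /hi /= DS.
  have := cbd n t; rewrite ler_norml => /andP[_ c2].
  lra.
have lohi t n m : lo t n <= hi t m.
  have lh k : lo t k <= hi t k by rewrite /lo /hi; have := D0 k; lra.
  apply: (le_trans (lo_inc t _ _ (leq_maxl n m))); apply: (le_trans (lh _)).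
  exact: hi_dec (leq_maxr n m).
pose gl t := sup (range (lo t)).
have glP t n : lo t n <= gl t <= hi t n.
  apply/andP; split.
    apply: sup_upper_bound; last by exists n.
    split; first by exists (lo t 0%N), 0%N.
    by exists (hi t 0%N) => _ [m _ <-]; apply: lohi.
  apply: ge_sup; first by exists (lo t 0%N), 0%N.
  by move=> _ [m _ <-]; apply: lohi.
have glb t n : `|gl t - g n t| <= 2 * D n.
  move: (glP t n); rewrite /lo /hi => /andP[l1 l2].
  rewrite ler_norml; apply/andP; split; lra.
have glc : continuous gl.
  move=> t; apply/cvgrPdist_lt => eps eps0.
  have [n Hn] := @e2_small (eps / 16) (divr_gt0 eps0 (ltr0n _ 16)).
  have eps4 : 0 < eps / 4 by apply: divr_gt0.
  have /cvgrPdist_lt /(_ _ eps4) H := gc n t.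
  apply: filterS H => s Hs.
  have g1 := glb t n; have g2 := glb s n.
  move: g1 g2 Hs; rewrite /D !ler_norml !ltr_norml => /andP[a1 a2] /andP[b1 b2] /andP[c1 c2].
  apply/andP; split; lra.
pose l := mkX glc.
have lb n : `|xs n - l| <= 2 * D n.
  rewrite xnormE; apply: supn_le => [|a Ea]; first by have := D0 n; lra.
  rewrite xvB // mkX_agree // -gE // distrC; exact: glb.
apply/cvg_ex; exists l => A /nbhs_ballP [eps eps0 HA].
have [n Hn] := @e2_small (eps / 8) (divr_gt0 eps0 (ltr0n _ 8)).
apply: filterS (Hxs n) => y /norm_ball Hy; apply: HA; apply/norm_ball.
apply: (le_lt_trans (ler_distD (xs n) _ _)); rewrite (distrC l).
have := lb n; rewrite /D; move: eps0 => /= eps0; lra.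
Qed.

HB.instance Definition _ := Uniform_isComplete.Build X X_complete.

Definition xle (x y : X) : Prop := forall a, E a -> xv x a <= xv y a.
Definition xjn (x y : X) : X := mkX (cMax (xv_cont x) (xv_cont y)).

Lemma xjnE x y a : E a -> xv (xjn x y) a = Num.max (xv x a) (xv y a).
Proof. exact: mkX_agree. Qed.

Lemma X_bl : @banach_lattice R X xle xjn.
Proof.
split; first by move=> x a Ea.
split; first by move=> x y H1 H2; apply: X_eq => a Ea; apply/le_anti; rewrite H1 // H2.
split; first by move=> x y z H1 H2 a Ea; exact: (le_trans (H1 a Ea) (H2 a Ea)).
split; first by move=> x y z H a Ea; rewrite !xvD // lerD2r H.
split; first by move=> c x y c0 H a Ea; rewrite !xvZ // ler_wpM2l // H.
split.
  move=> x y; split; first by move=> a Ea; rewrite xjnE // le_max lexx.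
  split; first by move=> a Ea; rewrite xjnE // le_max lexx orbT.
  by move=> z H1 H2 a Ea; rewrite xjnE // ge_max H1 // H2.
move=> x y H; rewrite !xnormE; apply: supn_le; first exact: xs_ge0.
move=> a Ea; apply: (le_trans _ (xs_ub y a Ea)).
have := H a Ea; rewrite !xjnE // !xvN //.
by rewrite !maxrN.
Qed.

Lemma X_hom : @lattice_hom_on R Om X xjn E xv.
Proof.
split; first exact: xv_cont.
split; first by move=> c x y a Ea; rewrite xvD // xvZ.
by move=> x y a Ea; rewrite xjnE.
Qed.

Lemma X_opnorm (a0 : Om) : E a0 -> @opnorm_is R Om X E xv 1.
Proof.
move=> Ea0; split => //; split; first by move=> x; rewrite mul1r.
move=> d Hd; have := Hd (mkX (cC 1)).
suff -> : `|mkX (cC 1)| = 1 :> R.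
  rewrite mulr1 => H; apply: le_trans H.
  by have := xs_ub (mkX (cC 1)) a0 Ea0; rewrite mkX_agree // normr1.
apply/le_anti/andP; split.
  rewrite xnormE; apply: supn_le => // a Ea; by rewrite mkX_agree // normr1.
by have := xs_ub (mkX (cC 1)) a0 Ea0; rewrite mkX_agree // normr1.
Qed.

Lemma supn_agree (A : set Om) (f g : Om -> R) : (forall a, A a -> f a = g a) ->
  supn A f = supn A g.
Proof.
move=> H; rewrite /supn; congr sup; apply/seteqP; split => _ [a Aa <-]; exists a => //.
  by rewrite H.
by rewrite H.
Qed.

Lemma supn_sub (f : Om -> R) : continuous f -> supn E f <= supn setT f.
Proof.
move=> cf; apply: supn_le; first exact: supn_ge0.
by move=> a _; apply: supn_ub.
Qed.

Lemma cMr (c : R) {f : Om -> R} : continuous f -> continuous (fun t => f t * c).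
Proof. by move=> cf t; apply: cvgM; [apply: cf|apply: cvg_cst]. Qed.

Definition cls (f : Om -> R) : X :=
  match pselect (continuous f) with left cf => mkX cf | right _ => 0 end.

Lemma cls_eq (f : Om -> R) (u : X) : continuous f -> agree (xv u) f -> cls f = u.
Proof.
move=> cf H; rewrite /cls; case: pselect => // cf'.
by apply: X_eq => a Ea; rewrite mkX_agree // H.
Qed.

Lemma cls_agree (f : Om -> R) : continuous f -> agree (xv (cls f)) f.
Proof. by move=> cf; rewrite /cls; case: pselect => // cf'; apply: mkX_agree. Qed.

Lemma main (a0 : Om) (Ea0 : E a0) (T' : X -> Om -> R) :
  lattice_hom_on xjn setT T' -> (forall x a, E a -> T' x a = xv x a) ->
  opnorm_is setT T' 1 ->
  @admits_equiv_URED R Om setT -> @admits_equiv_URED R Om E.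
Proof.
move=> [Tc [Tlin _]] Text [_ [Tb _]] [N [[Nwd [ND [NZ [c1 [c2 [c10 [c20 Nb]]]]]]] NU]].
have TL c u v t : T' (c *: u + v) t = c * T' u t + T' v t by exact: Tlin.
have T0 t : T' 0 t = 0.
  by have := TL 1 0 0 t; rewrite scaler0 addr0 mul1r; lra.
have TD u v : T' (u + v) = fun t => T' u t + T' v t.
  by apply/funext => t; have := TL 1 u v t; rewrite scale1r mul1r.
have TZ c u : T' (c *: u) = fun t => c * T' u t.
  by apply/funext => t; have := TL c u 0 t; rewrite addr0 T0 addr0.
have TB u v : T' (u - v) = fun t => T' u t - T' v t.
  by rewrite TD -scaleN1r TZ; apply/funext => t; rewrite mulN1r.
pose NE f := N (T' (cls f)).
exists NE; split.
  split.
    move=> f g cf cg fg; rewrite /NE (@cls_eq g (cls f)) //.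
    by move=> a Ea; rewrite cls_agree // fg.
  split.
    move=> f g cf cg; rewrite /NE (@cls_eq _ (cls f + cls g)); first last.
    - by move=> a Ea; rewrite xvD // !cls_agree.
    - exact: cD.
    by rewrite TD; apply: ND; apply: Tc.
  split.
    move=> c f cf; rewrite /NE (@cls_eq _ (c *: cls f)); first last.
    - by move=> a Ea; rewrite xvZ // !cls_agree.
    - exact: cM.
    by rewrite TZ; apply: NZ; apply: Tc.
  exists c1, c2; split => //; split => // f cf; rewrite /NE.
  have [l1 l2] := Nb _ (Tc (cls f)).
  have s1 : supn E f <= supn setT (T' (cls f)).
    rewrite (@supn_agree E f (T' (cls f))); first exact/supn_sub/Tc.
    by move=> a Ea; rewrite Text // cls_agree.
  have s2 : supn setT (T' (cls f)) <= supn E f.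
    have := Tb (cls f); rewrite mul1r xnormE (@supn_agree E (xv (cls f)) f) //.
    exact: cls_agree.
  split; [apply: le_trans l1; rewrite ler_pM2l // | apply: (le_trans l2); rewrite ler_pM2l //].
move=> x y z r cx cy cz Nx Ny Nxy dir.
have cxy n : continuous (fun t => x n t - y n t) by apply: cD => //; apply: cN.
have -> : (fun n => NE (fun t => x n t - y n t)) =
          (fun n => N (fun t => T' (cls (x n)) t - T' (cls (y n)) t)).
  apply/funext => n; rewrite /NE (@cls_eq _ (cls (x n) - cls (y n))) ?TB //.
  by move=> a Ea; rewrite xvB // !cls_agree.
apply: (NU _ _ (T' (cls z)) r) => //.
- have -> : (fun n => N (fun t => (T' (cls (x n)) t + T' (cls (y n)) t) / 2)) =
            (fun n => NE (fun t => (x n t + y n t) / 2)).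
    apply/funext => n; rewrite /NE (@cls_eq (fun t => (x n t + y n t) / 2) (2^-1 *: (cls (x n) + cls (y n)))).
    + by rewrite TZ TD; congr N; apply/funext => t; rewrite mulrC.
    + by apply: cMr; apply: cD.
    + by move=> a Ea; rewrite xvZ // xvD // !cls_agree // mulrC.
  exact: Nxy.
- move=> n a _; rewrite -[T' (cls (x n)) a - _]/((fun t => T' (cls (x n)) t - T' (cls (y n)) t) a).
  rewrite -TB.
  have -> : cls (x n) - cls (y n) = r n *: cls z.
    by apply: X_eq => b Eb; rewrite xvB // xvZ // !cls_agree // dir.
  by rewrite TZ.
Qed.

Lemma thm_sec :
  @admits_equiv_URED R Om [set: Om] ->
  (forall (X : completeNormedModType R) (le : X -> X -> Prop) (jn : X -> X -> X),
     banach_lattice le jn ->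
     forall (T : X -> Om -> R) (c : R),
       lattice_hom_on jn E T -> opnorm_is E T c ->
       exists T' : X -> Om -> R,
         lattice_hom_on jn [set: Om] T' /\
         (forall x a, E a -> T' x a = T x a) /\
         opnorm_is [set: Om] T' c) ->
  @admits_equiv_URED R Om E.
Proof.
move=> HN Hext.
have [E0|/set0P[a0 Ea0]] := eqVneq E set0.
  exists (fun _ => 0); split.
    split => //; split; first by move=> *; rewrite addr0.
    split; first by move=> *; rewrite mulr0.
    exists 1, 1; split => //; split => // f cf.
    by rewrite /supn E0 image_set0 sup0 mulr0.
  move=> x y z r _ _ _ Nx; have := Nx 0%N => /eqP; by rewrite eq_sym oner_eq0.
have [T' [Th [Te To]]] := Hext X xle xjn X_bl xv 1 X_hom (X_opnorm a0 Ea0).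
have H1 := @main a0 Ea0 T' Th. have H2 := H1 Te. have H3 := H2 To. exact: H3 HN.
Qed.

End S.

Theorem theorem11 (R : realType) (Om : topologicalType) (E : set Om) :
  hausdorff_space Om -> compact [set: Om] -> closed E ->
  @admits_equiv_URED R Om [set: Om] ->
  (forall (X : completeNormedModType R) (le : X -> X -> Prop) (jn : X -> X -> X),
     banach_lattice le jn ->
     forall (T : X -> Om -> R) (c : R),
       lattice_hom_on jn E T -> opnorm_is E T c ->
       exists T' : X -> Om -> R,
         lattice_hom_on jn [set: Om] T' /\
         (forall x a, E a -> T' x a = T x a) /\
         opnorm_is [set: Om] T' c) ->
  @admits_equiv_URED R Om E.
Proof. by move=> _ cpt _; exact: thm_sec. Qed.
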